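(* Let $\mathfrak g$ be a finite-dimensional complex simple Lie algebra with invariant form $\langle\cdot,\cdot\rangle$, let $s,x\in\mathfrak g$ with $s$ semisimple, $x$ nilpotent and $[s,x]=0$, and write $\mathfrak g=\bigoplus_r\mathfrak g_r$ for the eigenspace decomposition of $\mathrm{ad}_s$. Let $\hat{\mathfrak g}_{g}$ be the Lie algebra with basis-linear generators $a^g_m$ ($a\in\mathfrak g_r$, $m\in r+\mathbb Z$, linear in $a$) and a central element $K$, with bracket $$[a^g_m,b^g_n]=[a,b]^g_{m+n}+\delta_{m,-n}\,\langle [x,a]+m a,\,b\rangle\,K\qquad(a\in\mathfrak g_{r_a},\ b\in\mathfrak g_{r_b}),$$ and let $\hat{\mathfrak g}=\mathfrak g\otimes\mathbb C[t,t^{-1}]\oplus\mathbb CK$ with $[a_m,b_n]=[a,b]_{m+n}+m\delta_{m,-n}\langle a,b\rangle K$ (where $a_m=a\otimes t^m$). Define $\eta(a)=\langle s+x,a\rangle K$. Then the linear map $$f:\hat{\mathfrak g}_g\to\hat{\mathfrak g},\qquad f(a^g_m)=a_{m-r}-\delta_{m,r}\,\eta(a)\quad(a\in\mathfrak g_r,\ m\in r+\mathbb Z),\qquad f(K)=K,$$ is an isomorphism of Lie algebras.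
   Context: $\hat{\mathfrak g}_g$ is the $g$-twisted mode algebra of the affine vertex algebra for the inner automorphism $g=e^{-2\pi i(s+x)}$ (acting via $\mathrm{ad}$). Here $[a,b]\in\mathfrak g_{r_a+r_b}$, so $[a,b]^g_{m+n}$ is a well-defined generator. *)

(* Defs.v *)
From HB Require Import structures.
From mathcomp Require Import all_boot all_order all_algebra.
From mathcomp Require Import finmap.
From mathcomp Require Export complex.
From mathcomp Require Export reals.

Set Implicit Arguments.
Unset Strict Implicit.
Unset Printing Implicit Defensive.

Import Order.TTheory GRing.Theory Num.Theory.
Local Open Scope ring_scope.

Section LieDefs.
Variables (C : fieldType) (V : vectType C).

Definition bilinear_br (br : V -> V -> V) :=
  (forall c a b1 b2, br a (c *: b1 + b2) = c *: br a b1 + br a b2) /\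
  (forall c a1 a2 b, br (c *: a1 + a2) b = c *: br a1 b + br a2 b).

Definition is_lie (br : V -> V -> V) :=
  [/\ bilinear_br br, (forall a, br a a = 0) &
      (forall a b c, br a (br b c) + br b (br c a) + br c (br a b) = 0)].

Definition lie_ideal (br : V -> V -> V) (I : {vspace V}) :=
  forall a b, b \in I -> br a b \in I.

Definition simple_lie (br : V -> V -> V) :=
  [/\ is_lie br, (exists a b, br a b != 0) &
      (forall I : {vspace V}, lie_ideal br I -> I = 0%VS \/ I = fullv)].

Definition invariant_form (br : V -> V -> V) (form : V -> V -> C) :=
  [/\ (forall c a b1 b2, form a (c *: b1 + b2) = c * form a b1 + form a b2),
      (forall a b, form a b = form b a),
      (forall a b c, form (br a b) c = form a (br b c)) &
      (forall a, (forall b, form a b = 0) -> a = 0)].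

Definition ad_semisimple (br : V -> V -> V) (s : V) :=
  exists e : seq V, basis_of fullv e /\
    forall v, v \in e -> exists r : C, br s v = r *: v.

Definition ad_nilpotent (br : V -> V -> V) (x : V) :=
  exists k : nat, forall a, iter k (br x) a = 0.

Definition fs_add (K : choiceType) (u v : {fsfun K -> V with 0}) : {fsfun K -> V with 0} :=
  [fsfun k in (finsupp u `|` finsupp v)%fset => u k + v k].

Definition fs_scale (K : choiceType) (c : C) (u : {fsfun K -> V with 0}) : {fsfun K -> V with 0} :=
  [fsfun k in finsupp u => c *: u k].

(** ----- the affine algebra  ghat = g (x) C[t,t^-1] (+) C K -----
   an element is (u, k) where u n is the coefficient of t^n, i.e.
   (u, k) = sum_n (u n)_n + k K. *)
Definition loop := ({fsfun int -> V with 0} * C)%type.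

Definition loop_add (u v : loop) : loop := (fs_add u.1 v.1, u.2 + v.2).
Definition loop_scale (c : C) (u : loop) : loop := (fs_scale c u.1, c * u.2).

(* [a_m, b_n] = [a,b]_{m+n} + m delta_{m,-n} <a,b> K, extended bilinearly; K central *)
Definition loop_br (br : V -> V -> V) (form : V -> V -> C) (u v : loop) : loop :=
  ([fsfun p in [fset (i + j)%R | i in finsupp u.1, j in finsupp v.1]%fset =>
      \sum_(i <- finsupp u.1) \sum_(j <- finsupp v.1 | (i + j)%R == p)
          br (u.1 i) (v.1 j)],
   \sum_(i <- finsupp u.1) \sum_(j <- finsupp v.1 | (i + j)%R == 0)
          i%:~R * form (u.1 i) (v.1 j)).

(** An element is (u, k) where
   u : C * int -> g is finitely supported, and u (r, n) is the component in
   g_r of mode m = r + n, i.e. (u, k) = sum_{(r,n)} (u (r,n))^g_{r+n} + k K;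
   it is required (twisted_ok) that u (r,n) lies in g_r = ker (ad_s - r). *)
Definition twisted := ({fsfun (C * int)%type -> V with 0} * C)%type.

Definition eig (br : V -> V -> V) (s : V) (r : C) (a : V) := br s a = r *: a.

Definition twisted_ok (br : V -> V -> V) (s : V) (u : twisted) :=
  forall (r : C) (n : int), eig br s r (u.1 (r, n)).

Definition tw_add (u v : twisted) : twisted := (fs_add u.1 v.1, u.2 + v.2).
Definition tw_scale (c : C) (u : twisted) : twisted := (fs_scale c u.1, c * u.2).

Definition mode (p : (C * int)%type) : C := p.1 + p.2%:~R.

(* [a^g_m, b^g_n] = [a,b]^g_{m+n} + delta_{m,-n} <[x,a] + m a, b> K,
   a in g_{r_a}, b in g_{r_b}; [a,b] in g_{r_a+r_b}; extended bilinearly *)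
Definition tw_br (br : V -> V -> V) (form : V -> V -> C) (x : V) (u v : twisted) : twisted :=
  ([fsfun q in [fset ((p.1 + p'.1)%R, (p.2 + p'.2)%R) | p in finsupp u.1, p' in finsupp v.1]%fset =>
      \sum_(p <- finsupp u.1) \sum_(p' <- finsupp v.1 |
              ((p.1 + p'.1)%R, (p.2 + p'.2)%R) == q)
          br (u.1 p) (v.1 p')],
   \sum_(p <- finsupp u.1) \sum_(p' <- finsupp v.1 | mode p + mode p' == 0)
          form (br x (u.1 p) + mode p *: u.1 p) (v.1 p')).

(* f(a^g_m) = a_{m-r} - delta_{m,r} eta(a),  eta(a) = <s + x, a> K,  f(K) = K,
   extended linearly (for the key (r,n): m - r = n, and m = r iff n = 0). *)
Definition twist_map (form : V -> V -> C) (s x : V) (u : twisted) : loop :=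
  ([fsfun n in [fset p.2 | p in finsupp u.1]%fset =>
      \sum_(p <- finsupp u.1 | p.2 == n) u.1 p],
   u.2 - \sum_(p <- finsupp u.1 | p.2 == 0%R) form (s + x) (u.1 p)).

Definition lie_iso_twisted (br : V -> V -> V) (form : V -> V -> C) (s x : V)
    (f : twisted -> loop) :=
  [/\ (forall u v, twisted_ok br s u -> twisted_ok br s v ->
         f (tw_add u v) = loop_add (f u) (f v)),
      (forall c u, twisted_ok br s u -> f (tw_scale c u) = loop_scale c (f u)),
      (forall u v, twisted_ok br s u -> twisted_ok br s v ->
         f (tw_br br form x u v) = loop_br br form (f u) (f v)),
      (forall u v, twisted_ok br s u -> twisted_ok br s v -> f u = f v -> u = v) &
      (forall w : loop, exists2 u, twisted_ok br s u & f u = w)].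

End LieDefs.

(* Main.v *)
Require Import Defs.
From HB Require Import structures.
From mathcomp Require Import all_boot all_order all_algebra.
From mathcomp Require Import finmap complex reals.
From mathcomp Require Import ring.
Set Implicit Arguments. Unset Strict Implicit.
Import Order.TTheory GRing.Theory Num.Theory.
Local Open Scope ring_scope.

Lemma sum_pred1_seq (I : eqType) (M : zmodType) (S : seq I) (x : I) (G : I -> M) :
  uniq S -> (x \notin S -> G x = 0) -> \sum_(q <- S | q == x) G q = G x.
Proof.
move=> uS Gx; case xS: (x \in S); last first.
  rewrite big1_seq ?Gx ?xS // => q /andP[/eqP-> ]; rewrite xS.
  done.
rewrite (big_rem x) //= eqxx big1_seq ?addr0 // => q /andP[/eqP-> ].
by rewrite mem_rem_uniqF.
Qed.

Lemma push (I J : eqType) (M : zmodType) (A : seq I) (S : seq J) (k : I -> J)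
  (P : pred J) (G : J -> I -> M) :
  uniq S -> {in A, forall a, k a \in S} ->
  \sum_(q <- S | P q) \sum_(a <- A | k a == q) G q a = \sum_(a <- A | P (k a)) G (k a) a.
Proof.
move=> uS kS.
under eq_bigr do rewrite big_mkcond.
rewrite exchange_big /= [RHS]big_mkcond /= big_seq [RHS]big_seq.
apply: eq_bigr => a aA.
rewrite (eq_bigr (fun q => if q == k a then (if P (k a) then G (k a) a else 0) else 0)); last first.
  move=> q Pq; rewrite [k a == q]eq_sym; case: (eqVneq q (k a)) => [Eq|//]; by rewrite -Eq Pq Eq.
rewrite -big_mkcondr /=; case Pk: (P (k a)).
  rewrite (eq_bigl (fun q => q == k a)) ?sum_pred1_seq ?kS //.
  by move=> q /=; case: (eqVneq q (k a)) => [->|]; rewrite ?Pk ?andbF ?andbT.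
by rewrite big1 // => q /andP[Pq /eqP Eq]; rewrite Eq Pk in Pq.
Qed.

Lemma sum_supp (K : choiceType) (V M : zmodType) (f : {fsfun K -> V with 0})
  (S : {fset K}) (P : pred K) (G : K -> V -> M) :
  (finsupp f `<=` S)%fset -> (forall k, G k 0 = 0) ->
  \sum_(k <- finsupp f | P k) G k (f k) = \sum_(k <- S | P k) G k (f k).
Proof.
move=> fS G0; rewrite big_mkcond [RHS]big_mkcond.
rewrite (big_fset_incl _ fS) // => k kS kf.
by rewrite mem_finsupp negbK in kf; rewrite (eqP kf) G0; case: ifP.
Qed.

Lemma supp_fun (K : choiceType) (V : zmodType) (S : {fset K}) (F : K -> V) :
  (finsupp ([fsfun k in S => F k] : {fsfun K -> V with 0}) `<=` S)%fset.
Proof.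
apply/fsubsetP => k; rewrite mem_finsupp fsfun_fun; case: ifP => //.
by rewrite eqxx.
Qed.

Section Main.
Local Open Scope complex_scope.
Variables (R : realType) (V : vectType R[i]) (br : V -> V -> V)
  (form : V -> V -> R[i]) (s x : V).
Hypotheses (Hlie : is_lie br) (Hform : invariant_form br form).

Lemma brDr a b c : br a (b + c) = br a b + br a c.
Proof. by case: Hlie => [[H _] _ _]; have := H 1 a b c; rewrite !scale1r. Qed.
Lemma brDl a b c : br (a + b) c = br a c + br b c.
Proof. by case: Hlie => [[_ H] _ _]; have := H 1 a b c; rewrite !scale1r. Qed.
Lemma br0r a : br a 0 = 0.
Proof. by apply: (addrI (br a 0)); rewrite addr0 -brDr addr0. Qed.
Lemma br0l a : br 0 a = 0.
Proof. by apply: (addrI (br 0 a)); rewrite addr0 -brDl addr0. Qed.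
Lemma brZr a c b : br a (c *: b) = c *: br a b.
Proof. by case: Hlie => [[H _] _ _]; have := H c a b 0; rewrite !addr0 br0r addr0. Qed.
Lemma brZl a c b : br (c *: a) b = c *: br a b.
Proof. by case: Hlie => [[_ H] _ _]; have := H c a 0 b; rewrite !addr0 br0l addr0. Qed.
Lemma brsumr a (I : Type) (r : seq I) (P : pred I) (F : I -> V) :
  br a (\sum_(i <- r | P i) F i) = \sum_(i <- r | P i) br a (F i).
Proof. exact: (big_morph _ (brDr a) (br0r a)). Qed.
Lemma brsuml a (I : Type) (r : seq I) (P : pred I) (F : I -> V) :
  br (\sum_(i <- r | P i) F i) a = \sum_(i <- r | P i) br (F i) a.
Proof. exact: (big_morph (fun b => br b a) (fun b c => brDl b c a) (br0l a)). Qed.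
Lemma brA a b : br a b = - br b a.
Proof.
case: Hlie => _ H0 _; apply/eqP; rewrite -addr_eq0.
by have := H0 (a + b); rewrite brDl !brDr !H0 add0r addr0 => ->.
Qed.

Lemma formDr a b c : form a (b + c) = form a b + form a c.
Proof. by case: Hform => H _ _ _; have := H 1 a b c; rewrite scale1r mul1r. Qed.
Lemma form0r a : form a 0 = 0.
Proof. by apply: (addrI (form a 0)); rewrite addr0 -formDr addr0. Qed.
Lemma formZr a c b : form a (c *: b) = c * form a b.
Proof. by case: Hform => H _ _ _; have := H c a b 0; rewrite !addr0 form0r addr0. Qed.
Lemma formC a b : form a b = form b a.
Proof. by case: Hform. Qed.
Lemma formDl a b c : form (a + b) c = form a c + form b c.
Proof. by rewrite formC formDr !(formC c). Qed.
Lemma formZl a c b : form (c *: a) b = c * form a b.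
Proof. by rewrite formC formZr formC. Qed.
Lemma form0l a : form 0 a = 0.
Proof. by rewrite formC form0r. Qed.
Lemma formI a b c : form (br a b) c = form a (br b c).
Proof. by case: Hform. Qed.
Lemma formsumr a (I : Type) (r : seq I) (P : pred I) (F : I -> V) :
  form a (\sum_(i <- r | P i) F i) = \sum_(i <- r | P i) form a (F i).
Proof. exact: (big_morph _ (formDr a) (form0r a)). Qed.

Lemma eig0 r : eig br s r 0.
Proof. by rewrite /eig br0r scaler0. Qed.

Lemma eig_brx r a : br s x = 0 -> eig br s r a -> eig br s r (br x a).
Proof.
move=> sx ea; case: Hlie => _ _ J.
have := J s x a; rewrite sx br0r addr0 (brA a s) ea -scaleNr brZr => /eqP.
by rewrite scaleNr addr_eq0 opprK => /eqP.
Qed.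

Lemma form_eig0 r r' a b : eig br s r a -> eig br s r' b -> r + r' != 0 ->
  form a b = 0.
Proof.
move=> ea eb rr; have : (r + r') * form a b = 0.
  by rewrite mulrDl -formZl -formZr -ea -eb -[form a (br s b)]formI (brA a s) -scaleN1r formZl mulN1r subrr.
by move/eqP; rewrite mulf_eq0 (negPf rr) => /eqP.
Qed.


Lemma eig_indep (I : eqType) (rho : I -> R[i]) (l : seq I) (a : I -> V) :
  uniq (map rho l) -> (forall i, i \in l -> eig br s (rho i) (a i)) ->
  \sum_(i <- l) a i = 0 -> forall i, i \in l -> a i = 0.
Proof.
elim: l a => [|i0 l IH] a //= /andP[ni0 ul] ea S0.
have eb : forall i, i \in l -> eig br s (rho i) ((rho i - rho i0) *: a i).
  move=> i il; rewrite /eig brZr (ea i) ?inE ?il ?orbT //.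
  by rewrite !scalerA mulrC.
have Sb : \sum_(i <- l) (rho i - rho i0) *: a i = 0.
  have -> : \sum_(i <- l) (rho i - rho i0) *: a i =
     br s (\sum_(i <- i0 :: l) a i) - rho i0 *: \sum_(i <- i0 :: l) a i.
    rewrite brsumr scaler_sumr -sumrB big_cons (ea i0) ?inE ?eqxx // subrr add0r.
    apply: eq_big_seq => i il; rewrite (ea i) ?inE ?il ?orbT //.
    by rewrite scalerBl.
  by rewrite S0 br0r scaler0 subrr.
have al : forall i, i \in l -> a i = 0.
  move=> i il; have := IH _ ul eb Sb i il; move/eqP; rewrite scaler_eq0.
  case/orP => [|/eqP //]; rewrite subr_eq0 => /eqP E.
  by case/negP: ni0; rewrite -E; apply: map_f.
have ai0 : a i0 = 0.
  by move: S0; rewrite big_cons big1_seq ?addr0 // => i /andP[_ /al].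
by move=> i; rewrite inE => /orP[/eqP -> //| /al].
Qed.

Lemma fs_addE (K : choiceType) (u v : {fsfun K -> V with 0}) k :
  fs_add u v k = u k + v k.
Proof.
rewrite /fs_add fsfun_fun in_fsetU !mem_finsupp; case: ifP => // /negbT.
by rewrite negb_or !negbK => /andP[/eqP-> /eqP->]; rewrite addr0.
Qed.

Lemma fs_scaleE (K : choiceType) c (u : {fsfun K -> V with 0}) k :
  fs_scale c u k = c *: u k.
Proof.
rewrite /fs_scale fsfun_fun !mem_finsupp; case: ifP => // /negbT.
by rewrite negbK => /eqP->; rewrite scaler0.
Qed.

Lemma fs_add_supp (K : choiceType) (u v : {fsfun K -> V with 0}) :
  (finsupp (fs_add u v) `<=` finsupp u `|` finsupp v)%fset.
Proof. exact: supp_fun. Qed.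

Lemma fs_scale_supp (K : choiceType) c (u : {fsfun K -> V with 0}) :
  (finsupp (fs_scale c u) `<=` finsupp u)%fset.
Proof. exact: supp_fun. Qed.

Notation f := (twist_map form s x).

Lemma tm1 (u : twisted V) n :
  (f u).1 n = \sum_(p <- finsupp u.1 | p.2 == n) u.1 p.
Proof.
rewrite /twist_map /= fsfun_fun; case: ifP => // /negbT nS.
rewrite big1_seq // => p /andP[/eqP pn pS]; case/negP: nS; rewrite -pn.
by apply/imfsetP; exists p.
Qed.

Lemma tw_br1 (u v : twisted V) q :
  (tw_br br form x u v).1 q = \sum_(p <- finsupp u.1) \sum_(p' <- finsupp v.1 |
              ((p.1 + p'.1)%R, (p.2 + p'.2)%R) == q) br (u.1 p) (v.1 p').
Proof.
rewrite /tw_br /= fsfun_fun; case: ifP => // /negbT nS.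
rewrite big1_seq // => p /andP[_ pS]; rewrite big1_seq // => p' /andP[/eqP pn pS'].
by case/negP: nS; rewrite -pn; apply/imfset2P; exists p => //; exists p'.
Qed.

Lemma loop_br1 (u v : loop V) n :
  (loop_br br form u v).1 n = \sum_(i <- finsupp u.1) \sum_(j <- finsupp v.1 |
              (i + j)%R == n) br (u.1 i) (v.1 j).
Proof.
rewrite /loop_br /= fsfun_fun; case: ifP => // /negbT nS.
rewrite big1_seq // => p /andP[_ pS]; rewrite big1_seq // => p' /andP[/eqP pn pS'].
by case/negP: nS; rewrite -pn; apply/imfset2P; exists p => //; exists p'.
Qed.

Lemma f_add (u v : twisted V) : f (tw_add u v) = loop_add (f u) (f v).
Proof.
rewrite /loop_add; congr pair.
  apply/fsfunP => n; rewrite fs_addE !tm1 /=.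
  rewrite (sum_supp (G := fun _ y => y) _ (fs_add_supp _ _)) //=.
  under eq_bigr do rewrite fs_addE.
  rewrite big_split /=; congr (_ + _); symmetry;
    apply: (@sum_supp _ _ _ _ _ _ (fun _ y => y)) => //.
    exact: fsubsetUl.
  exact: fsubsetUr.
rewrite /=.
rewrite (sum_supp (G := fun _ y => form (s + x) y) _ (fs_add_supp _ _)) ?form0r //=.
under eq_bigr do rewrite fs_addE formDr.
rewrite big_split /=.
rewrite -(sum_supp (G := fun _ y => form (s + x) y) _ (fsubsetUl _ _)) ?form0r //.
rewrite -(sum_supp (G := fun _ y => form (s + x) y) _ (fsubsetUr _ _)) ?form0r //.
by rewrite opprD addrACA.
Qed.

Lemma f_scale c (u : twisted V) : f (tw_scale c u) = loop_scale c (f u).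
Proof.
rewrite /loop_scale; congr pair.
  apply/fsfunP => n; rewrite fs_scaleE !tm1 /=.
  rewrite (sum_supp (G := fun _ y => y) _ (fs_scale_supp _ _)) //=.
  under eq_bigr do rewrite fs_scaleE.
  by rewrite -scaler_sumr.
rewrite /=.
rewrite (sum_supp (G := fun _ y => form (s + x) y) _ (fs_scale_supp _ _)) ?form0r //=.
under eq_bigr do rewrite fs_scaleE formZr.
by rewrite -mulr_sumr mulrBr.
Qed.

Lemma eigB r a b : eig br s r a -> eig br s r b -> eig br s r (a - b).
Proof.
move=> ea eb; rewrite /eig brDr -scaleN1r brZr eb ea.
by rewrite scalerDr !scalerA mulrC.
Qed.

Lemma f_inj (u v : twisted V) : twisted_ok br s u -> twisted_ok br s v ->
  f u = f v -> u = v.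
Proof.
move=> ou ov E.
have E1 : u.1 = v.1.
  apply/fsfunP => -[r n].
  have := congr1 (fun w : loop V => w.1 n) E; rewrite /= !tm1.
  set U := (finsupp u.1 `|` finsupp v.1)%fset.
  rewrite (@sum_supp _ _ _ u.1 U _ (fun _ y => y)) ?fsubsetUl //=.
  rewrite (@sum_supp _ _ _ v.1 U _ (fun _ y => y)) ?fsubsetUr //=.
  move/eqP; rewrite -subr_eq0 -sumrB -big_filter => /eqP S0.
  case rU: ((r, n) \in U); last first.
    move: rU; rewrite in_fsetU !mem_finsupp => /negbT.
    by rewrite negb_or !negbK => /andP[/eqP-> /eqP->].
  apply/eqP; rewrite -subr_eq0; apply/eqP.
  apply: (@eig_indep _ fst _ (fun p => u.1 p - v.1 p) _ _ S0).
  - rewrite map_inj_in_uniq ?filter_uniq ?fset_uniq // => p q.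
    rewrite !mem_filter => /andP[/eqP pn _] /andP[/eqP qn _].
    by case: p q pn qn => ? ? [? ?] /= -> -> ->.
  - by move=> [r' n'] _; apply: eigB; [apply: ou | apply: ov].
  - by rewrite mem_filter /= eqxx rU.
have E2 : u.2 = v.2.
  have := congr1 snd E; rewrite /= E1; exact: addIr.
by case: u v E1 E2 E {ou ov} => [u1 u2] [v1 v2] /= -> ->.
Qed.

Lemma f_surj : ad_semisimple br s ->
  forall w : loop V, exists2 u, twisted_ok br s u & f u = w.
Proof.
case=> e [be He] [w1 k].
pose t := in_tuple e.
pose N := size e.
pose rho (i : 'I_N) := coord t i (br s t`_i).
have Hrho : forall i : 'I_N, br s t`_i = rho i *: t`_i.
  move=> i; have [r Hr] := He _ (mem_nth 0 (ltn_ord i)).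
  by rewrite /rho Hr linearZ /= coord_free ?(basis_free be) // eqxx mulr1.
pose proj (r : R[i]) (v : V) := \sum_(i < N | rho i == r) coord t i v *: t`_i.
have eproj : forall r v, eig br s r (proj r v).
  move=> r v; rewrite /eig brsumr scaler_sumr; apply: eq_bigr => i /eqP ri.
  by rewrite brZr Hrho ri !scalerA mulrC.
have proj0 : forall r, proj r 0 = 0.
  by move=> r; rewrite /proj big1 // => i _; rewrite linear0 scale0r.
pose E := [fset rho i | i in 'I_N]%fset.
have sumproj : forall (S : seq R[i]) v, uniq S -> (forall i, rho i \in S) ->
    \sum_(r <- S) proj r v = v.
  move=> S v uS rS; rewrite /proj.
  rewrite (@push _ _ _ (index_enum 'I_N) S rho (fun _ => true)
     (fun _ i => coord t i v *: t`_i)) //.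
  exact: (esym (coord_basis (X := t) be (memvf v))).
pose D := [fset ((r, n) : (R[i] * int)%type) | r : R[i] in E, n : int in finsupp w1]%fset.
pose u1 : {fsfun (R[i] * int)%type -> V with 0} := [fsfun q in D => proj q.1 (w1 q.2)].
exists (u1, k + \sum_(p <- finsupp u1 | p.2 == 0) form (s + x) (u1 p)).
  by move=> r n; rewrite /= fsfun_fun; case: ifP => _; [exact: eproj | exact: eig0].
congr pair; last by rewrite /= addrK.
apply/fsfunP => n; rewrite tm1 /=.
rewrite (@sum_supp _ _ _ u1 D _ (fun _ y => y)) ?supp_fun //=.
rewrite big_seq_cond (eq_bigr (fun p => proj p.1 (w1 p.2))); last first.
  by move=> p /andP[pD _]; rewrite fsfun_fun pD.
rewrite -big_seq_cond big_mkcond big_imfset2 /=; last first.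
  by move=> [a b] [c d] _ _ /= [-> ->].
rewrite (eq_bigr (fun r => proj r (w1 n))); last first.
  move=> r _; rewrite -big_mkcond /= sum_pred1_seq ?fset_uniq //.
  by rewrite mem_finsupp negbK => /eqP ->; rewrite proj0.
apply: sumproj; first exact: fset_uniq.
by move=> i; apply/imfsetP; exists i.
Qed.

Lemma term_id (sx : br s x = 0) (p p' : (R[i] * int)%type) a b :
  eig br s p.1 a -> eig br s p'.1 b ->
  (if mode p + mode p' == 0 then form (br x a + mode p *: a) b else 0)
  - (if p.2 + p'.2 == 0 then form (s + x) (br a b) else 0)
  = (if p.2 + p'.2 == 0 then p.2%:~R * form a b else 0).
Proof.
case: p p' => r n [r' n'] /= ea eb.
have exa := eig_brx sx ea.
have Hs : form s (br a b) = r * form a b by rewrite -formI ea formZl.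
have Hx : form x (br a b) = form (br x a) b by rewrite -formI.
rewrite /mode /= !formDl formZl Hs Hx.
have [rr|rr] := eqVneq (r + r') 0.
  have -> : (r + n%:~R + (r' + n'%:~R) == 0) = (n + n' == 0).
    by rewrite addrACA rr add0r -intrD intr_eq0.
  case: ifP => _; last by rewrite subrr.
  by ring.
rewrite (form_eig0 ea eb rr) (form_eig0 exa eb rr) !mulr0 !addr0.
by case: ifP => _; case: ifP => _; rewrite ?subrr ?subr0 ?oppr0.
Qed.

Lemma expand (M : zmodType) (B : int -> V -> V -> M) (P : int -> int -> bool)
  (BDl : forall i a b c, B i (a + b) c = B i a c + B i b c)
  (BDr : forall i a b c, B i a (b + c) = B i a b + B i a c)
  (B0l : forall i c, B i 0 c = 0) (B0r : forall i c, B i c 0 = 0)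
  (u v : twisted V) :
  \sum_(i <- finsupp (f u).1) \sum_(j <- finsupp (f v).1 | P i j)
      B i ((f u).1 i) ((f v).1 j) =
  \sum_(p <- finsupp u.1) \sum_(p' <- finsupp v.1 | P p.2 p'.2)
      B p.2 (u.1 p) (v.1 p').
Proof.
have Bsl : forall i (I : Type) (r : seq I) (Q : pred I) F y,
    B i (\sum_(k <- r | Q k) F k) y = \sum_(k <- r | Q k) B i (F k) y.
  by move=> i I r Q F y; apply: (big_morph (fun a => B i a y) (fun a b => BDl i a b y) (B0l i y)).
have Bsr : forall i (I : Type) (r : seq I) (Q : pred I) F y,
    B i y (\sum_(k <- r | Q k) F k) = \sum_(k <- r | Q k) B i y (F k).
  by move=> i I r Q F y; apply: (big_morph (B i y) (BDr i y) (B0r i y)).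
pose Iu := [fset p.2 | p in finsupp u.1]%fset.
pose Iv := [fset p.2 | p in finsupp v.1]%fset.
have fuS : (finsupp (f u).1 `<=` Iu)%fset by exact: supp_fun.
have fvS : (finsupp (f v).1 `<=` Iv)%fset by exact: supp_fun.
rewrite (@sum_supp _ _ _ (f u).1 Iu (fun _ => true)
   (fun i y => \sum_(j <- finsupp (f v).1 | P i j) B i y ((f v).1 j))) //=; last first.
  by move=> i; apply: big1 => j _; apply: B0l.
transitivity (\sum_(i <- Iu) \sum_(j <- Iv | P i j) \sum_(p <- finsupp u.1 | p.2 == i)
    \sum_(p' <- finsupp v.1 | p'.2 == j) B i (u.1 p) (v.1 p')).
  apply: eq_bigr => i _.
  rewrite (@sum_supp _ _ _ (f v).1 Iv (P i) (fun j y => B i ((f u).1 i) y)) //=.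
  apply: eq_bigr => j _; rewrite !tm1 Bsl; apply: eq_bigr => p _.
  by rewrite Bsr.
transitivity (\sum_(i <- Iu) \sum_(p <- finsupp u.1 | p.2 == i)
    \sum_(p' <- finsupp v.1 | P p.2 p'.2) B p.2 (u.1 p) (v.1 p')).
  apply: eq_bigr => i _; rewrite exchange_big /=; apply: eq_bigr => p /eqP pi.
  rewrite -pi.
  rewrite (@push _ _ _ (finsupp v.1) Iv snd (P p.2) (fun _ p' => B p.2 (u.1 p) (v.1 p'))) ?fset_uniq // => p' pv.
  by apply/imfsetP; exists p'.
rewrite (@push _ _ _ (finsupp u.1) Iu snd (fun _ => true)
   (fun _ p => \sum_(p' <- finsupp v.1 | P p.2 p'.2) B p.2 (u.1 p) (v.1 p'))) ?fset_uniq // => p pu.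
by apply/imfsetP; exists p.
Qed.

Lemma collapse (M : zmodType) (G : V -> M) n
  (GD : forall a b, G (a + b) = G a + G b) (G0 : G 0 = 0) (u v : twisted V) :
  \sum_(q <- finsupp (tw_br br form x u v).1 | q.2 == n) G ((tw_br br form x u v).1 q)
  = \sum_(p <- finsupp u.1) \sum_(p' <- finsupp v.1 | p.2 + p'.2 == n)
      G (br (u.1 p) (v.1 p')).
Proof.
have Gs : forall (I : Type) (r : seq I) (Q : pred I) F,
    G (\sum_(k <- r | Q k) F k) = \sum_(k <- r | Q k) G (F k).
  by move=> I r Q F; apply: (big_morph G GD G0).
pose S := [fset ((p.1 + p'.1)%R, (p.2 + p'.2)%R) | p in finsupp u.1, p' in finsupp v.1]%fset.
have WS : (finsupp (tw_br br form x u v).1 `<=` S)%fset by exact: supp_fun.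
rewrite (@sum_supp _ _ _ _ S (fun q => q.2 == n) (fun _ y => G y)) //=.
transitivity (\sum_(q <- S | q.2 == n) \sum_(p <- finsupp u.1)
   \sum_(p' <- finsupp v.1 | ((p.1 + p'.1)%R, (p.2 + p'.2)%R) == q) G (br (u.1 p) (v.1 p'))).
  apply: eq_bigr => q _; rewrite tw_br1 Gs; apply: eq_bigr => p _.
  by rewrite Gs.
rewrite exchange_big /=; apply: eq_big_seq => p pu.
rewrite (@push _ _ _ (finsupp v.1) S (fun p' => ((p.1 + p'.1)%R, (p.2 + p'.2)%R))
   (fun q => q.2 == n) (fun _ p' => G (br (u.1 p) (v.1 p')))) ?fset_uniq // => p' pv.
by apply/imfset2P; exists p => //; exists p'.
Qed.

Lemma f_br (sx : br s x = 0) (u v : twisted V) :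
  twisted_ok br s u -> twisted_ok br s v ->
  f (tw_br br form x u v) = loop_br br form (f u) (f v).
Proof.
move=> ou ov; apply: injective_projections.
  apply/fsfunP => n; rewrite tm1 loop_br1.
  rewrite (@collapse _ (fun y => y) n) //.
  rewrite (@expand _ (fun _ a b => br a b) (fun i j => i + j == n)) // => _.
  - exact: brDl.
  - exact: brDr.
  - exact: br0l.
  - exact: br0r.
rewrite /=.
rewrite (@collapse _ (fun y => form (s + x) y) 0); last 2 first.
- by move=> a b; rewrite formDr.
- exact: form0r.
rewrite (@expand _ (fun i a b => i%:~R * form a b) (fun i j => i + j == 0));
  [| by move=> i a b c; rewrite formDl mulrDr
   | by move=> i a b c; rewrite formDr mulrDr
   | by move=> i c; rewrite form0l mulr0
   | by move=> i c; rewrite form0r mulr0].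
rewrite -sumrB; apply: eq_big_seq => p pu.
rewrite big_mkcond [X in _ - X]big_mkcond [RHS]big_mkcond -sumrB.
apply: eq_big_seq => p' pv /=.
case: p {pu} => r n; case: p' {pv} => r' n'.
exact: (@term_id sx (r, n) (r', n') _ _ (ou r n) (ov r' n')).
Qed.

End Main.

Unset Implicit Arguments.
Local Open Scope complex_scope.

Theorem lemma2p1 (R : realType) (V : vectType R[i])
    (br : V -> V -> V) (form : V -> V -> R[i]) (s x : V) :
  simple_lie br ->
  invariant_form br form ->
  ad_semisimple br s ->
  ad_nilpotent br x ->
  br s x = 0 ->
  lie_iso_twisted br form s x (twist_map form s x).
Proof.
move=> [Hlie _ _] Hform Hss _ sx; split.
- by move=> u v _ _; apply: (f_add s x Hform).
- by move=> c u _; apply: (f_scale s x Hform).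
- by move=> u v ou ov; apply: (f_br Hlie Hform sx).
- by move=> u v ou ov; apply: (f_inj Hlie).
- exact: (f_surj form x Hlie Hss).
Qed.
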